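(* Let $(M,\Sigma)$ be a measurable space, $r\ge1$, and $\mu_1,\dots,\mu_r$ non-atomic countably additive finite measures on $\Sigma$; put $\mu=\frac1r\sum_{i=1}^r\mu_i$. For $k\ge1$ let $t(k)=k\bmod r$ if this is nonzero and $t(k)=r$ otherwise. Let $(H_k)_{k\ge1}$ be a sequence of measurable sets such that for every $k$: $H_k\subseteq M\setminus\bigcup_{i=1}^{k-1}H_i$, $H_k$ admits a strong solution (a partition $H_k=F_1\sqcup\dots\sqcup F_r$ with $\mu_i(F_i)\ge\mu_i(F_j)$ for all $i,j$), and $\mu_{t(k)}(H_k)\ge 2^{-(r-1)}\mu_{t(k)}\bigl(M\setminus\bigcup_{i=1}^{k-1}H_i\bigr)$. For $s\ge0$ let $M_s=M\setminus\bigcup_{i=1}^{sr}H_i$ (so $M_0=M$). Then for every $s\ge1$, $$\mu(M_s)\le\frac{2^{r-1}-1}{2^{r-1}}\,\mu(M_{s-1}).$$ *)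

(* Defs.v *)
From mathcomp Require Import all_boot all_order all_algebra.
From mathcomp Require Import all_classical all_reals all_analysis.
Set Implicit Arguments. Unset Strict Implicit. Unset Printing Implicit Defensive.
Import Order.TTheory GRing.Theory Num.Theory.
Local Open Scope classical_set_scope.
Local Open Scope ring_scope.
Local Open Scope ereal_scope.

Definition non_atomic d (T : measurableType d) (R : realType)
  (m : set T -> \bar R) : Prop :=
  forall A, measurable A -> 0 < m A ->
    exists B, [/\ measurable B, B `<=` A & 0 < m B < m A].

Definition tidx (r k : nat) : nat := if (k %% r == 0)%N then r else (k %% r)%N.

Definition idx1 (r : nat) : set nat := [set i | (1 <= i <= r)%N].

Definition strong_solution d (T : measurableType d) (R : realType) (r : nat)
  (mu : nat -> set T -> \bar R) (H : set T) : Prop :=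
  exists F : nat -> set T,
    [/\ forall i, idx1 r i -> measurable (F i),
        H = \bigcup_(i in idx1 r) F i,
        forall i j, idx1 r i -> idx1 r j -> i <> j -> F i `&` F j = set0
      & forall i j, idx1 r i -> idx1 r j -> mu i (F j) <= mu i (F i)].

Definition avg_measure d (T : measurableType d) (R : realType) (r : nat)
  (mu : nat -> set T -> \bar R) (A : set T) : \bar R :=
  ((r%:R)^-1)%:E * \sum_(1 <= i < r.+1) mu i A.

Definition Hunion T (H : nat -> set T) (k : nat) : set T :=
  \bigcup_(i in [set i | (1 <= i < k)%N]) H i.

(* Main.v *)
Require Import Defs.
From mathcomp Require Import all_boot all_order all_algebra.
From mathcomp Require Import all_classical all_reals all_analysis.
From mathcomp Require Import lra.
Import Order.TTheory GRing.Theory Num.Theory.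
Local Open Scope classical_set_scope.
Local Open Scope ring_scope.
Local Open Scope ereal_scope.

Lemma ekey (R : realType) (a b h A : \bar R) (c : R) :
  a \is a fin_num -> b \is a fin_num -> h \is a fin_num ->
  A = b + h -> c%:E * A <= h -> a <= b -> a <= (1 - c)%:E * A.
Proof.
move=> /fineK <- /fineK <- /fineK <- -> .
rewrite -EFinD -!EFinM !lee_fin => h1 h2.
rewrite mulrBl mul1r; lra.
Qed.

Lemma Hunion_meas d (T : measurableType d) (H : nat -> set T) k :
  (forall k, (1 <= k)%N -> measurable (H k)) -> measurable (~` Hunion H k).
Proof.
move=> mH; apply: measurableC; apply: bigcup_measurable => i /= /andP[+ _].
exact: mH.
Qed.

Lemma Hunion_mono T (H : nat -> set T) m n : (m <= n)%N -> Hunion H m `<=` Hunion H n.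
Proof.
move=> mn x [i /= /andP[i1 im] Hx]; exists i => //=.
by rewrite i1 /=; apply: leq_trans mn.
Qed.

Theorem lemma4 (d : measure_display) (T : measurableType d) (R : realType)
  (r : nat) (mu : nat -> {finite_measure set T -> \bar R}) (H : nat -> set T) :
  (1 <= r)%N ->
  (forall i, idx1 r i -> non_atomic (mu i)) ->
  (forall k, (1 <= k)%N -> measurable (H k)) ->
  (forall k, (1 <= k)%N -> H k `<=` ~` Hunion H k) ->
  (forall k, (1 <= k)%N -> strong_solution r (fun i => mu i) (H k)) ->
  (forall k, (1 <= k)%N ->
     (((2%:R ^+ r.-1 : R)^-1)%:E * mu (tidx r k) (~` Hunion H k)
       <= mu (tidx r k) (H k))) ->
  forall s : nat, (1 <= s)%N ->
    avg_measure r (fun i => mu i) (~` Hunion H (s * r).+1)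
    <= (((2%:R ^+ r.-1 - 1) / 2%:R ^+ r.-1 : R))%:E
       * avg_measure r (fun i => mu i) (~` Hunion H (s.-1 * r).+1).
Proof.
move=> r1 _ mH sub _ hyp s s1.
have -> : ((2%:R ^+ r.-1 - 1) / 2%:R ^+ r.-1 : R)%R = (1 - (2%:R ^+ r.-1 : R)^-1)%R.
  by rewrite mulrBl divff // mul1r.
have per : forall i, (1 <= i <= r)%N ->
    mu i (~` Hunion H (s * r).+1) <=
    (1 - (2%:R ^+ r.-1 : R)^-1)%:E * mu i (~` Hunion H (s.-1 * r).+1).
  move=> i /andP[i1 ir].
  set k := (s.-1 * r + i)%N.
  have ksr : (k <= s * r)%N.
    by rewrite /k -{2}(prednK s1) mulSn addnC leq_add2r.
  have k1 : (1 <= k)%N by rewrite /k; apply: leq_trans i1 (leq_addl _ _).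
  have tk : tidx r k = i.
    rewrite /tidx /k modnMDl.
    have [ilt|] := ltnP i r.
      by rewrite modn_small // -[i == 0%N]negbK -lt0n i1.
    move=> ri; have -> : i = r by apply/eqP; rewrite eqn_leq ir ri.
    by rewrite modnn.
  have mA := @Hunion_meas _ _ H k mH.
  have mHk := mH k k1.
  have mAD : measurable (~` Hunion H k `\` H k) by apply: measurableD.
  have := hyp k k1; rewrite tk => hk.
  apply: (@le_trans _ _ ((1 - (2%:R ^+ r.-1 : R)^-1)%:E * mu i (~` Hunion H k))).
    apply: (@ekey R _ (mu i (~` Hunion H k `\` H k)) (mu i (H k))).
    - by apply: fin_num_measure; apply: measurableC; apply: bigcup_measurable => j /andP[+ _]; exact: mH.
    - exact: fin_num_measure.
    - exact: fin_num_measure.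
    - rewrite -measureU //; last by rewrite setDKI.
      by rewrite setUC setDUK //; apply: sub.
    - exact: hk.
    - apply: le_measure; rewrite ?inE //; first exact: Hunion_meas.
      move=> x nx; split.
        move=> hx; apply: nx; apply: (@Hunion_mono _ H k) => //.
        by apply: leq_trans (leqnSn _).
      move=> hx; apply: nx; exists k => //=.
      by rewrite k1 /= ltnS.
  apply: lee_wpmul2l.
    rewrite lee_fin subr_ge0 invf_le1 ?exprn_ege1 ?ler1n //.
  apply: (le_measure (mu i)); rewrite ?inE //; first exact: Hunion_meas.
  apply: subsetC; apply: Hunion_mono.
  by rewrite /k -[X in (X <= _)%N]addn1 leq_add2l.
rewrite /avg_measure muleCA.
apply: lee_wpmul2l; first by rewrite lee_fin invr_ge0.
rewrite ge0_sume_distrr; last by move=> i _; apply: measure_ge0.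
rewrite big_nat_cond [X in _ <= X]big_nat_cond.
apply: lee_sum => i /andP[/andP[i1 ir] _]; apply: per.
by rewrite i1 -ltnS.
Qed.
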